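(* Let $2\le d\le m$ and $\delta>0$. Let $A$ be a deterministic priority mechanism that processes elementary bids and is truthful without money and with verification for CAs with known multi-minded bidders. Then there is an instance with $m$ goods in which all demanded sets have cardinality at most $d$ on which the social welfare of $A$ is less than $\mathrm{OPT}/((1-\delta)d)$; i.e., the approximation ratio of $A$ is greater than $(1-\delta)d$.
   Context: Combinatorial auction with a set $\mathsf U$ of $m$ goods (single copy each) and bidders; bidder $i$ has a public collection $\mathcal S_i$ of nonempty subsets of $\mathsf U$ (known bidders) and a private valuation $v_i:\mathcal S_i\to\mathbb R_{\ge0}$. Truthfulness without money and with verification (known bidders) means: for all $i$, $\mathbf b_{-i}$, true $v_i$ and declarations $b_i$ with $b_i(A_i(b_i,\mathbf b_{-i}))\le v_i(A_i(b_i,\mathbf b_{-i}))$, $v_i(A_i(v_i,\mathbf b_{-i}))\ge v_i(A_i(b_i,\mathbf b_{-i}))$. Priority mechanism processing elementary bids: the input is a finite set $I$ of elementary bids $(i,S,v)$ (bidder $i$ declares value $v$ for demanded set $S$), drawn from the class $\mathcal I$ of all possible elementary bids. The mechanism proceeds in rounds; in each round, without looking at the unprocessed items, it chooses a total order on $\mathcal I$ (which may depend on the items processed and decisions taken so far), receives the first unprocessed item of $I$ in this order, and makes an irrevocable accept/reject decision on it; accepting $(i,S,v)$ allocates $S$ to $i$ and yields welfare $v$. The output must be a feasible allocation (each bidder gets at most one set, sets pairwise disjoint). $\mathrm{OPT}$ is the maximum welfare of a feasible allocation. *)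

(* Defs.v *)
From HB Require Import structures.
From mathcomp Require Import all_boot all_order all_algebra.
Set Implicit Arguments. Unset Strict Implicit. Unset Printing Implicit Defensive.
Import Order.TTheory GRing.Theory Num.Theory.
Local Open Scope ring_scope.

Section Auction.
Variables (m : nat) (R : realFieldType).

Definition bid := (nat * {set 'I_m} * R)%type.
Definition bid_bidder (x : bid) : nat := x.1.1.
Definition bid_set (x : bid) : {set 'I_m} := x.1.2.
Definition bid_value (x : bid) : R := x.2.

Definition valid_bid (x : bid) : bool := (bid_set x != set0) && (0 <= bid_value x).

(* history = items processed so far, with the decisions taken *)
Definition history := seq (bid * bool).

(* A deterministic priority mechanism: in each round the order on I depends
   only on the history; the accept/reject decision on the received item
   depends on the history and on that item. *)
Record prio_mech := PrioMech {
  pm_ord : history -> rel bid;       (* pm_ord h x y : x has priority over y *)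
  pm_dec : history -> bid -> bool    (* true = accept *)
}.

Definition strict_total_order (r : rel bid) : Prop :=
  [/\ (forall x, valid_bid x -> ~~ r x x),
      (forall x y z, valid_bid x -> valid_bid y -> valid_bid z ->
                     r x y -> r y z -> r x z)
    & (forall x y, valid_bid x -> valid_bid y -> x != y -> r x y || r y x)].

Definition priority_mechanism (M : prio_mech) : Prop :=
  forall h : history, strict_total_order (pm_ord M h).

Definition pickmin (r : rel bid) (s : seq bid) : option bid :=
  foldr (fun x acc => match acc with
                      | None => Some x
                      | Some y => if r x y then Some x else Some y
                      end) None s.

Fixpoint run_aux (M : prio_mech) (fuel : nat) (h : history) (rest : seq bid)
  : history :=
  match fuel with
  | 0 => h
  | k.+1 =>
    match pickmin (pm_ord M h) rest with
    | None => h
    | Some x => run_aux M k (rcons h (x, pm_dec M h x)) (rem x rest)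
    end
  end.

Definition run (M : prio_mech) (I : seq bid) : history := run_aux M (size I) [::] I.

Definition accepted (M : prio_mech) (I : seq bid) : seq bid :=
  [seq p.1 | p <- run M I & p.2].

Definition alloc (M : prio_mech) (I : seq bid) (i : nat) : option {set 'I_m} :=
  match [seq x <- accepted M I | bid_bidder x == i] with
  | x :: _ => Some (bid_set x)
  | [::] => None
  end.

Definition mech_welfare (M : prio_mech) (I : seq bid) : R :=
  \sum_(x <- accepted M I) bid_value x.

Definition optval (f : {set 'I_m} -> R) (o : option {set 'I_m}) : R :=
  if o is Some A then f A else 0.

(* Instances with known multi-minded bidders 0..n-1: coll i is the public
   collection S_i, a profile b assigns bidder i a valuation on S_i. *)
Definition known_coll (n : nat) (coll : 'I_n -> {set {set 'I_m}}) : Prop :=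
  forall i S, S \in coll i -> S != set0.

Definition nonneg_profile (n : nat) (coll : 'I_n -> {set {set 'I_m}})
  (b : 'I_n -> {set 'I_m} -> R) : Prop :=
  forall i S, S \in coll i -> 0 <= b i S.

Definition bids_of (n : nat) (coll : 'I_n -> {set {set 'I_m}})
  (b : 'I_n -> {set 'I_m} -> R) : seq bid :=
  [seq ((nat_of_ord i, A), b i A) | i <- enum 'I_n, A <- enum (coll i)].

Definition feasible_output (M : prio_mech) : Prop :=
  forall n (coll : 'I_n -> {set {set 'I_m}}) (b : 'I_n -> {set 'I_m} -> R),
    known_coll coll -> nonneg_profile coll b ->
    let acc := accepted M (bids_of coll b) in
    uniq [seq bid_bidder x | x <- acc] /\
    pairwise (fun x y => [disjoint bid_set x & bid_set y]) acc.

Definition truthful_verif (M : prio_mech) : Prop :=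
  forall n (coll : 'I_n -> {set {set 'I_m}}) (b : 'I_n -> {set 'I_m} -> R)
         (i : 'I_n) (v : {set 'I_m} -> R),
    known_coll coll -> nonneg_profile coll b ->
    (forall S, S \in coll i -> 0 <= v S) ->
    let bv := fun j => if j == i then v else b j in
    let Ab := alloc M (bids_of coll b) i in
    optval (b i) Ab <= optval v Ab ->
    optval v Ab <= optval v (alloc M (bids_of coll bv) i).

Definition feasible_alloc (n : nat) (coll : 'I_n -> {set {set 'I_m}})
  (X : {ffun 'I_n -> option {set 'I_m}}) : bool :=
  [forall i, if X i is Some A then A \in coll i else true] &&
  [forall i, forall j, (i != j) ==>
     (if X i is Some A then (if X j is Some B then [disjoint A & B] else true)
      else true)].

Definition alloc_welfare (n : nat) (v : 'I_n -> {set 'I_m} -> R)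
  (X : {ffun 'I_n -> option {set 'I_m}}) : R :=
  \sum_(i < n) optval (v i) (X i).

Definition OPT (n : nat) (coll : 'I_n -> {set {set 'I_m}})
  (v : 'I_n -> {set 'I_m} -> R) : R :=
  \big[Num.max/0]_(X : {ffun 'I_n -> option {set 'I_m}} | feasible_alloc coll X)
     alloc_welfare v X.

End Auction.

(* Main.v *)
Require Import Defs.
From HB Require Import structures.
From mathcomp Require Import all_boot all_order all_algebra.
From mathcomp Require Import ring lra zify.
From Stdlib Require Import Classical.
Set Implicit Arguments. Unset Strict Implicit. Unset Printing Implicit Defensive.
Import Order.TTheory GRing.Theory Num.Theory.
Local Open Scope ring_scope.

Lemma pickmin_cons m (R : realFieldType) (r : rel (bid m R)) x s :
  pickmin r (x :: s) = match pickmin r s with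
    | None => Some x | Some y => if r x y then Some x else Some y end.
Proof. by []. Qed.

Lemma pickmin_none m (R : realFieldType) (r : rel (bid m R)) s :
  pickmin r s = None -> s = [::].
Proof. by case: s => // x s; rewrite pickmin_cons; case: pickmin => // y; case: ifP. Qed.

Lemma pickmin_some m (R : realFieldType) (r : rel (bid m R)) s :
  s != [::] -> exists y, pickmin r s = Some y.
Proof.
move=> hs; case E: (pickmin r s) => [y|]; first by exists y.
by move: hs; rewrite (pickmin_none E).
Qed.

Lemma pickmin_mem m (R : realFieldType) (r : rel (bid m R)) s y :
  pickmin r s = Some y -> y \in s.
Proof.
elim: s y => [|x s IH] y //; rewrite pickmin_cons.
case E: (pickmin r s) => [z|]; last by case=> <-; rewrite mem_head.
case: ifP => _ [<-]; first by rewrite mem_head.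
by rewrite in_cons (IH _ E) orbT.
Qed.

Lemma pickmin_min m (R : realFieldType) (r : rel (bid m R)) s y :
  strict_total_order r -> all (@valid_bid m R) s -> pickmin r s = Some y ->
  forall z, z \in s -> ~~ r z y.
Proof.
case=> irr tr _; elim: s y => [|x s IH] y // /andP[vx vs]; rewrite pickmin_cons.
case E: (pickmin r s) => [w|]; last first.
  by rewrite (pickmin_none E) => -[<-] z; rewrite inE => /eqP ->; apply: irr.
have vw : valid_bid w := allP vs w (pickmin_mem E).
case: ifP => rxw [<-] z; rewrite in_cons => /orP[/eqP->|zs].
- exact: irr.
- apply/negP => rzx; have vz := allP vs z zs.
  by move: (IH w vs E z zs); rewrite (tr z x w vz vx vw rzx rxw).
- by rewrite rxw.
- exact: IH w vs E z zs.
Qed.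

Lemma run_auxP m (R : realFieldType) (M : prio_mech m R) f h r :
  exists t, run_aux M f h r = h ++ t /\ all (fun p => p.1 \in r) t.
Proof.
elim: f h r => [|f IH] h r /=; first by exists [::]; rewrite cats0.
case E: (pickmin _ _) => [x|]; last by exists [::]; rewrite cats0.
have [t [-> Ht]] := IH (rcons h (x, pm_dec M h x)) (rem x r).
exists ((x, pm_dec M h x) :: t); split; first by rewrite cat_rcons.
rewrite /= (pickmin_mem E) /=; apply/allP => p pt.
exact: mem_rem (allP Ht p pt).
Qed.

Lemma run_aux_S m (R : realFieldType) (M : prio_mech m R) f h r :
  run_aux M f.+1 h r = match pickmin (pm_ord M h) r with
    | None => h
    | Some x => run_aux M f (rcons h (x, pm_dec M h x)) (rem x r) end.
Proof. by []. Qed.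

Lemma accepted_first m (R : realFieldType) (M : prio_mech m R) I x :
  pickmin (pm_ord M [::]) I = Some x ->
  exists acc, accepted M I = (if pm_dec M [::] x then x :: acc else acc)
              /\ {subset acc <= rem x I}.
Proof.
case: I => [|y s] E //; rewrite /accepted /run [size _]/= run_aux_S E.
have [t [-> Ht]] := run_auxP M (size s) [:: (x, pm_dec M [::] x)] (rem x (y :: s)).
exists [seq p.1 | p <- t & p.2]; split; first by case: pm_dec.
move=> z /mapP[p]; rewrite mem_filter => /andP[_ pt] ->; exact: allP Ht p pt.
Qed.

Lemma mem_bids m (R : realFieldType) n (coll : 'I_n -> {set {set 'I_m}})
  (b : 'I_n -> {set 'I_m} -> R) z :
  z \in bids_of coll b -> exists i A, A \in coll i /\ z = ((nat_of_ord i, A), b i A).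
Proof. by move/allpairsPdep => [i [A [_ HA ->]]]; exists i, A; rewrite mem_enum in HA. Qed.

Lemma in_bids m (R : realFieldType) n (coll : 'I_n -> {set {set 'I_m}})
  (b : 'I_n -> {set 'I_m} -> R) i A :
  A \in coll i -> ((nat_of_ord i, A), b i A) \in bids_of coll b.
Proof. by move=> HA; apply/allpairsPdep; exists i, A; rewrite mem_enum mem_enum. Qed.

Lemma uniq_bids m (R : realFieldType) n (coll : 'I_n -> {set {set 'I_m}})
  (b : 'I_n -> {set 'I_m} -> R) : uniq (bids_of coll b).
Proof.
apply: allpairs_uniq_dep; first exact: enum_uniq.
  by move=> i _; apply: enum_uniq.
move=> [i A] [j B] _ _ /= [] /val_inj Eij EAB _; subst j B => //.
Qed.

Lemma valid_bids m (R : realFieldType) n (coll : 'I_n -> {set {set 'I_m}})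
  (b : 'I_n -> {set 'I_m} -> R) :
  known_coll coll -> nonneg_profile coll b -> all (@valid_bid m R) (bids_of coll b).
Proof.
move=> kc nn; apply/allP => z /mem_bids [i [A [HA ->]]].
by rewrite /valid_bid /bid_set /bid_value /= (kc i A HA) (nn i A HA).
Qed.

Lemma OPT_ge m (R : realFieldType) n (coll : 'I_n -> {set {set 'I_m}})
  (v : 'I_n -> {set 'I_m} -> R) X :
  feasible_alloc coll X -> alloc_welfare v X <= OPT coll v.
Proof. by move=> fX; rewrite /OPT (bigD1 X) //= le_max lexx. Qed.

Lemma acc_bidder m (R : realFieldType) (M : prio_mech m R) n
  (coll : 'I_n -> {set {set 'I_m}}) (v : 'I_n -> {set 'I_m} -> R) y :
  feasible_output M -> known_coll coll -> nonneg_profile coll v ->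
  (forall z, z \in bids_of coll v -> bid_bidder z = bid_bidder y) ->
  pickmin (pm_ord M [::]) (bids_of coll v) = Some y -> pm_dec M [::] y ->
  accepted M (bids_of coll v) = [:: y].
Proof.
move=> feas kc nn hb E dy.
have [acc [Ea Hs]] := accepted_first E; rewrite dy in Ea.
have [hu _] := feas n coll v kc nn; rewrite Ea in hu.
rewrite Ea; case: acc Ea Hs hu => [|z acc] // _ Hs.
have zI : z \in bids_of coll v by apply: mem_rem (Hs z (mem_head _ _)).
by rewrite /= in_cons (hb z zI) eqxx.
Qed.

Lemma acc_overlap m (R : realFieldType) (M : prio_mech m R) n
  (coll : 'I_n -> {set {set 'I_m}}) (v : 'I_n -> {set 'I_m} -> R) y :
  feasible_output M -> known_coll coll -> nonneg_profile coll v ->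
  (forall z, z \in bids_of coll v -> ~~ [disjoint bid_set y & bid_set z]) ->
  pickmin (pm_ord M [::]) (bids_of coll v) = Some y -> pm_dec M [::] y ->
  accepted M (bids_of coll v) = [:: y].
Proof.
move=> feas kc nn hb E dy.
have [acc [Ea Hs]] := accepted_first E; rewrite dy in Ea.
have [_ hp] := feas n coll v kc nn; rewrite Ea in hp.
rewrite Ea; case: acc Ea Hs hp => [|z acc] // _ Hs.
have zI : z \in bids_of coll v by apply: mem_rem (Hs z (mem_head _ _)).
by rewrite /= (negbTE (hb z zI)).
Qed.

Definition coll2 m n (j : 'I_n) (A B : {set 'I_m}) : 'I_n -> {set {set 'I_m}} :=
  fun i => if i == j then [set A; B] else set0.

Lemma mem_pair m (R : realFieldType) n (j : 'I_n) (A B : {set 'I_m})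
  (v : 'I_n -> {set 'I_m} -> R) z :
  z \in bids_of (coll2 j A B) v ->
  z = ((nat_of_ord j, A), v j A) \/ z = ((nat_of_ord j, B), v j B).
Proof.
move/mem_bids => [i [S [HS ->]]]; move: HS; rewrite /coll2.
case: eqP => [->|]; last by rewrite inE.
by rewrite !inE => /orP[] /eqP ->; [left|right].
Qed.

Lemma in_pairA m (R : realFieldType) n (j : 'I_n) (A B : {set 'I_m})
  (v : 'I_n -> {set 'I_m} -> R) :
  ((nat_of_ord j, A), v j A) \in bids_of (coll2 j A B) v.
Proof. by apply: in_bids; rewrite /coll2 eqxx set21. Qed.

Lemma in_pairB m (R : realFieldType) n (j : 'I_n) (A B : {set 'I_m})
  (v : 'I_n -> {set 'I_m} -> R) :
  ((nat_of_ord j, B), v j B) \in bids_of (coll2 j A B) v.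
Proof. by apply: in_bids; rewrite /coll2 eqxx set22. Qed.

Lemma known_pair m n (j : 'I_n) (A B : {set 'I_m}) :
  A != set0 -> B != set0 -> known_coll (coll2 j A B).
Proof.
move=> hA hB i S; rewrite /coll2; case: eqP => _; last by rewrite inE.
by rewrite !inE => /orP[] /eqP ->.
Qed.

Lemma nonneg_pair m (R : realFieldType) n (j : 'I_n) (A B : {set 'I_m})
  (v : 'I_n -> {set 'I_m} -> R) :
  0 <= v j A -> 0 <= v j B -> nonneg_profile (coll2 j A B) v.
Proof.
move=> hA hB i S; rewrite /coll2; case: eqP => [->|_]; last by rewrite inE.
by rewrite !inE => /orP[] /eqP ->.
Qed.

Lemma size_pair m n d (j : 'I_n) (A B : {set 'I_m}) :
  (#|A| <= d)%N -> (#|B| <= d)%N ->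
  forall i S, S \in coll2 j A B i -> (#|S| <= d)%N.
Proof.
move=> hA hB i S; rewrite /coll2; case: eqP => _; last by rewrite inE.
by rewrite !inE => /orP[] /eqP ->.
Qed.

Lemma OPT_pair m (R : realFieldType) n (j : 'I_n) (A B : {set 'I_m})
  (v : 'I_n -> {set 'I_m} -> R) : v j A <= OPT (coll2 j A B) v.
Proof.
pose X := [ffun i : 'I_n => if i == j then Some A else None].
have fX : feasible_alloc (coll2 j A B) X.
  apply/andP; split.
    by apply/forallP => i; rewrite ffunE /coll2; case: eqP => // _; rewrite set21.
  apply/forallP => i; apply/forallP => k; apply/implyP => nik.
  rewrite !ffunE; case: eqP => [Ei|//]; case: eqP => [Ek|//].
  by move: nik; rewrite Ei Ek eqxx.
apply: le_trans (OPT_ge v fX); rewrite /alloc_welfare (bigD1 j) //= ffunE eqxx.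
rewrite big1 ?addr0 // => i /negbTE; rewrite ffunE => -> //.
Qed.

Unset Implicit Arguments.
Theorem theorem14 (m d : nat) (R : realFieldType) (delta : R)
  (M : prio_mech m R) :
  (2 <= d)%N -> (d <= m)%N -> 0 < delta ->
  priority_mechanism M -> feasible_output M -> truthful_verif M ->
  exists (n : nat) (coll : 'I_n -> {set {set 'I_m}}) (v : 'I_n -> {set 'I_m} -> R),
    [/\ known_coll coll,
        (forall i S, S \in coll i -> (#|S| <= d)%N),
        nonneg_profile coll v
      & (1 - delta) * d%:R * mech_welfare M (bids_of coll v) < OPT coll v].
Proof.
move=> d2 dm dpos prio feas truth.
apply: NNPP => Hno.
set rho := (1 - delta) * d%:R.
have G : forall n (coll : 'I_n -> {set {set 'I_m}}) (v : 'I_n -> {set 'I_m} -> R),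
  known_coll coll -> (forall i S, S \in coll i -> (#|S| <= d)%N) -> nonneg_profile coll v ->
  OPT coll v <= rho * mech_welfare M (bids_of coll v).
  move=> n coll v h1 h2 h3; rewrite leNgt; apply/negP => hlt; apply: Hno.
  by exists n, coll, v; split.
have d0 : (0 < d)%N by lia.
have dR : 0 < d%:R :> R by rewrite ltr0n.
pose e := fun j : 'I_d => widen_ord dm j.
have einj : injective e by move=> a b /(congr1 val) /= ab; apply: val_inj.
pose U := [set e j | j : 'I_d].
have Une : U != set0 by apply/set0Pn; exists (e (Ordinal d0)); apply: imset_f.
have UcardE : #|U| = d by rewrite card_imset // card_ord.
have Ucard : (#|U| <= d)%N by rewrite UcardE.
have so := prio [::].
have [_ _ tot] := so.
have decp : forall (j : 'I_d) S (a : R), S != set0 -> (#|S| <= d)%N -> 0 < a ->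
   pm_dec M [::] ((nat_of_ord j, S), a).
  move=> j S a hS hSd ha.
  pose v := fun (_ : 'I_d) (_ : {set 'I_m}) => a.
  pose c := coll2 j S S.
  have kc : known_coll c := known_pair (j:=j) hS hS.
  have nn : nonneg_profile c v := nonneg_pair (j:=j) (v:=v) (ltW ha) (ltW ha).
  have Hx : ((nat_of_ord j, S), a) \in bids_of c v := in_pairA j S S v.
  have [y Ey] : exists y, pickmin (pm_ord M [::]) (bids_of c v) = Some y.
    by apply: pickmin_some; apply/eqP => E; rewrite E in Hx.
  have ey : y = ((nat_of_ord j, S), a) by case: (mem_pair (pickmin_mem Ey)).
  subst y.
  case Ed: (pm_dec M [::] _) => //.
  have [acc [Ea Hs]] := accepted_first Ey; rewrite Ed in Ea.
  have acc0 : acc = [::].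
    case: acc Ea Hs => // z acc _ Hs.
    have zr := Hs z (mem_head _ _).
    by case: (mem_pair (mem_rem zr)) => ez; move: zr; rewrite ez mem_rem_uniqF ?uniq_bids.
  have := G _ c v kc (size_pair (j:=j) hSd hSd) nn.
  rewrite /mech_welfare Ea acc0 big_nil mulr0 => h2.
  have := OPT_pair j S S v => h1.
  have : a <= 0 by apply: le_trans h1 h2.
  by rewrite leNgt ha.
have key : forall (j : 'I_d) T (W : R), T != set0 -> (#|T| <= d)%N -> T != U ->
    0 < W -> W < 1 ->
    pm_ord M [::] ((nat_of_ord j, U), 1) ((nat_of_ord j, T), W).
  move=> j T W hT hTd hTU W0 W1.
  pose eps : R := (d%:R + 1)^-1.
  have dp1 : 0 < d%:R + 1 :> R by lra.
  have eps0 : 0 < eps by rewrite invr_gt0.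
  have rho_eps : rho * eps < 1.
    rewrite /eps -[_ * _^-1]/(_ / _) ltr_pdivrMr // mul1r /rho.
    nra.
  pose b := fun (_ : 'I_d) (A : {set 'I_m}) => if A == U then 1 else eps.
  have bU : b j U = 1 by rewrite /b eqxx.
  have bT : b j T = eps by rewrite /b (negbTE hTU).
  pose c := coll2 j U T.
  have kc : known_coll c := known_pair (j:=j) Une hT.
  have nn : nonneg_profile c b.
    by apply: nonneg_pair; rewrite ?bU ?bT ?ler01 ?(ltW eps0).
  have sz := size_pair (j:=j) Ucard hTd.
  have [y Ey] : exists y, pickmin (pm_ord M [::]) (bids_of c b) = Some y.
    by apply: pickmin_some; apply/eqP => E; have := in_pairA j U T b; rewrite E.
  have hbid : forall z, z \in bids_of c b -> bid_bidder z = j.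
    by move=> z /mem_pair [] ->.
  case: (mem_pair (pickmin_mem Ey)); rewrite ?bU ?bT => ey; last first.
    have dy : pm_dec M [::] y by rewrite ey; apply: decp.
    have acc := acc_bidder feas kc nn (fun z hz => etrans (hbid z hz) (esym (hbid y (pickmin_mem Ey)))) Ey dy.
    have := G _ c b kc sz nn; rewrite /mech_welfare acc big_seq1 ey /bid_value /=.
    have := OPT_pair j U T b; rewrite bU => h1 h2.
    have : 1 <= rho * eps by apply: le_trans h1 h2.
    by rewrite leNgt rho_eps.
  have dy : pm_dec M [::] y by rewrite ey; apply: decp => //; apply: ltr01.
  have acc := acc_bidder feas kc nn (fun z hz => etrans (hbid z hz) (esym (hbid y (pickmin_mem Ey)))) Ey dy.
  have allocb : alloc M (bids_of c b) j = Some U.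
    by rewrite /alloc acc ey /= /bid_bidder /= eqxx.
  pose v := fun A : {set 'I_m} => if A == U then 1 else W.
  have vU : v U = 1 by rewrite /v eqxx.
  have vT : v T = W by rewrite /v (negbTE hTU).
  have vnn : forall S, S \in c j -> 0 <= v S.
    move=> S; rewrite /c /coll2 eqxx !inE => /orP[] /eqP ->; rewrite ?vU ?vT ?ler01 //.
    exact: ltW.
  have := truth d c b j v kc nn vnn; rewrite /= allocb /= bU vU => /(_ (lexx _)).
  set bv := fun k => _ => H.
  have bvU : bv j U = 1 by rewrite /bv eqxx vU.
  have bvT : bv j T = W by rewrite /bv eqxx vT.
  have nnv : nonneg_profile c bv.
    by apply: nonneg_pair; rewrite ?bvU ?bvT ?ler01 ?(ltW W0).
  have hbidv : forall z, z \in bids_of c bv -> bid_bidder z = j.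
    by move=> z /mem_pair [] ->.
  case: (boolP (pm_ord M [::] ((nat_of_ord j, U), 1) ((nat_of_ord j, T), W))) => // nXY.
  exfalso.
  have vX : valid_bid ((nat_of_ord j, U), 1 : R) by rewrite /valid_bid /= Une ler01.
  have vY : valid_bid ((nat_of_ord j, T), W) by rewrite /valid_bid /= hT (ltW W0).
  have XY : ((nat_of_ord j, U), 1 : R) != ((nat_of_ord j, T), W).
    by apply/eqP => -[] /esym/eqP; rewrite (negbTE hTU).
  have rYX : pm_ord M [::] ((nat_of_ord j, T), W) ((nat_of_ord j, U), 1).
    by have := tot _ _ vX vY XY; rewrite (negbTE nXY).
  have [y' Ey'] : exists y, pickmin (pm_ord M [::]) (bids_of c bv) = Some y.
    by apply: pickmin_some; apply/eqP => E; have := in_pairA j U T bv; rewrite E.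
  case: (mem_pair (pickmin_mem Ey')); rewrite ?bvU ?bvT => ey'.
    have := pickmin_min so (valid_bids kc nnv) Ey' (in_pairB j U T bv).
    by rewrite bvT ey' rYX.
  have dy' : pm_dec M [::] y' by rewrite ey'; apply: decp.
  have acc' := acc_bidder feas kc nnv (fun z hz => etrans (hbidv z hz) (esym (hbidv y' (pickmin_mem Ey')))) Ey' dy'.
  move: H; rewrite /alloc acc' ey' /= /bid_bidder /= eqxx /= /bid_set /= vT.
  by rewrite leNgt W1.
pose W : R := (1 + delta)^-1.
have dp : 0 < 1 + delta by lra.
have W0 : 0 < W by rewrite invr_gt0.
have W1 : W < 1 by rewrite invf_lt1 // ltrDl.
have hsing : forall j, [set e j] != U.
  move=> j; apply/eqP => E; have := UcardE; rewrite -E cards1 => d1.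
  by move: d2; rewrite -d1.
have sne : forall j, [set e j] != set0.
  by move=> j; apply/set0Pn; exists (e j); rewrite inE.
pose c := fun j : 'I_d => [set U; [set e j]].
pose v := fun (_ : 'I_d) (A : {set 'I_m}) => if A == U then 1 else W.
have kc : known_coll c.
  by move=> i S; rewrite !inE => /orP[] /eqP ->.
have sz : forall i S, S \in c i -> (#|S| <= d)%N.
  by move=> i S; rewrite !inE => /orP[] /eqP ->; rewrite ?cards1.
have nn : nonneg_profile c v.
  by move=> i S _; rewrite /v; case: ifP => _; [apply: ler01 | apply: ltW].
have [y Ey] : exists y, pickmin (pm_ord M [::]) (bids_of c v) = Some y.
  apply: pickmin_some; apply/eqP => E.
  have : U \in c (Ordinal d0) by rewrite !inE eqxx.
  by move/(@in_bids _ _ _ c v); rewrite E in_nil.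
have [i [A [HA ey]]] := mem_bids (pickmin_mem Ey).
move: HA; rewrite !inE => /orP[] /eqP EA; subst A; last first.
  have := key i [set e i] W (sne i) _ (hsing i) W0 W1; rewrite cards1 => /(_ d0) rXY.
  have XI : ((nat_of_ord i, U), v i U) \in bids_of c v by apply: in_bids; rewrite !inE eqxx.
  have := pickmin_min so (valid_bids kc nn) Ey XI.
  by rewrite ey /v eqxx (negbTE (hsing i)) rXY.
have vU : v i U = 1 by rewrite /v eqxx.
have dy : pm_dec M [::] y by rewrite ey vU; apply: decp => //; apply: ltr01.
have ov : forall z, z \in bids_of c v -> ~~ [disjoint bid_set y & bid_set z].
  move=> z /mem_bids [k [S [HS ->]]]; rewrite ey /bid_set /=.
  move: HS; rewrite !inE => /orP[] /eqP ->.
    apply/negP => /disjoint_setI0; rewrite setIid => /eqP; exact/negP.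
  by rewrite disjoint_sym disjoints1 negbK imset_f.
have acc := acc_overlap feas kc nn ov Ey dy.
pose X := [ffun j : 'I_d => Some [set e j]].
have fX : feasible_alloc c X.
  apply/andP; split.
    by apply/forallP => j; rewrite ffunE !inE eqxx orbT.
  apply/forallP => j; apply/forallP => k; apply/implyP => njk.
  rewrite !ffunE disjoints1 in_set1; apply: contra njk => /eqP /einj ->.
  by [].
have hX : alloc_welfare v X = d%:R * W.
  rewrite /alloc_welfare (eq_bigr (fun _ => W)); last first.
    by move=> j _; rewrite ffunE /= /v (negbTE (hsing j)).
  by rewrite sumr_const card_ord mulr_natl.
have := G _ c v kc sz nn; rewrite /mech_welfare acc big_seq1 ey /bid_value /= vU mulr1.
have := OPT_ge v fX; rewrite hX => h1 h2.
have h3 : d%:R * W <= rho by apply: le_trans h1 h2.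
have : rho < d%:R * W.
  rewrite /W -[_ * _^-1]/(_ / _) ltr_pdivlMr // /rho.
  have := mulr_gt0 dR (mulr_gt0 dpos dpos); nra.
by rewrite ltNge h3.
Qed.
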